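(* Let $N=\{1,\dots,n\}$, $n\ge 2$, be a parallel-link network with unit demand and latencies $\ell_i\in\mathcal{L}_c$. Let $c\in\mathbb{R}_+\cup\{\infty\}$ and $t\in\mathcal{T}(c)$. If $x_i(t)>0$ for all $i\in N$, then for all $i\in N$, $$t_i=\min\left\{\left(\ell'_i(x_i(t))+\frac{1}{\sum_{j\neq i}\frac{1}{\ell'_j(x_j(t))}}\right)\cdot x_i(t),\;c\right\},$$ where $\min\{s,\infty\}=s$.
   Context: $\mathcal{L}_c$: strictly increasing, convex, continuously differentiable functions $\mathbb{R}_+\to\mathbb{R}_+$. Parallel links $N$, one unit of flow; flows $x\in\mathbb{R}^N_+$ with $\sum_ix_i=1$. For tolls $t\in\mathbb{R}^N_+$, $x(t)$ is the unique Wardrop equilibrium for $t$: for all $i,j$ with $x_i>0$, $\ell_i(x_i)+t_i\le \ell_j(x_j)+t_j$. Profit $\Pi_i(t)=t_ix_i(t)$. For $c\in\mathbb{R}_+$, $\mathcal{T}(c)$ is the set of toll vectors $t$ with $0\le t_i\le c$ for all $i$ such that for every $i$ and every $t'_i\in[0,c]$, $\Pi_i(t_i,t_{-i})\ge\Pi_i(t'_i,t_{-i})$ (flow recomputed); $\mathcal{T}(\infty)$ is defined the same way with no upper bound on tolls (uncapped subgame perfect Nash equilibria). *)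

(* Defs.v *)
From Stdlib Require Import Reals Lra.
Open Scope R_scope.

Fixpoint sumR (n : nat) (f : nat -> R) : R :=
  match n with O => 0 | S k => sumR k f + f k end.

Definition right_deriv_at0 (f : R -> R) (d : R) : Prop :=
  forall eps, 0 < eps -> exists delta, 0 < delta /\
    forall h, 0 < h -> h < delta -> Rabs ((f h - f 0) / h - d) < eps.

(* The class L_c: f : R_+ -> R_+ strictly increasing, convex, continuously
   differentiable on R_+ (one-sided at 0), with derivative df. Only the
   values of f, df on [0, +oo) matter. *)
Definition in_Lc (f df : R -> R) : Prop :=
  (forall x, 0 <= x -> 0 <= f x) /\
  (forall x y, 0 <= x -> x < y -> f x < f y) /\
  (forall x y a, 0 <= x -> 0 <= y -> 0 <= a -> a <= 1 ->
      f (a * x + (1 - a) * y) <= a * f x + (1 - a) * f y) /\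
  (forall x, 0 < x -> derivable_pt_lim f x (df x)) /\
  right_deriv_at0 f (df 0) /\
  (forall x, 0 <= x -> forall eps, 0 < eps -> exists delta, 0 < delta /\
      forall y, 0 <= y -> Rabs (y - x) < delta -> Rabs (df y - df x) < eps).

Definition wardrop (n : nat) (l : nat -> R -> R) (t x : nat -> R) : Prop :=
  (forall i, (i < n)%nat -> 0 <= x i) /\
  sumR n x = 1 /\
  (forall i j, (i < n)%nat -> (j < n)%nat -> 0 < x i ->
      l i (x i) + t i <= l j (x j) + t j).

(* Cap c in R_+ u {oo}: None = oo. *)
Definition below_cap (c : option R) (v : R) : Prop :=
  match c with Some c0 => v <= c0 | None => True end.

Definition min_cap (s : R) (c : option R) : R :=
  match c with Some c0 => Rmin s c0 | None => s end.

Definition upd (t : nat -> R) (i : nat) (ti : R) : nat -> R :=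
  fun j => if Nat.eq_dec j i then ti else t j.

(* Since the
   equilibrium flow x(t) is unique, profits are expressed via any
   Wardrop equilibrium flow. *)
Definition in_T (n : nat) (l : nat -> R -> R) (c : option R) (t : nat -> R) : Prop :=
  (forall i, (i < n)%nat -> 0 <= t i /\ below_cap c (t i)) /\
  (forall i t', (i < n)%nat -> 0 <= t' -> below_cap c t' ->
     forall x x', wardrop n l t x -> wardrop n l (upd t i t') x' ->
       t' * x' i <= t i * x i).

(* Main.v *)
Require Import Defs.
From Stdlib Require Import Reals Lra Lia Ranalysis5 ClassicalEpsilon.
Open Scope R_scope.

Lemma pos_min a b : 0 < a -> 0 < b -> exists m, 0 < m /\ m <= a /\ m <= b.
Proof. intros. exists (Rmin a b). unfold Rmin; destruct Rle_dec; lra. Qed.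

Lemma sumR_ext n f g : (forall j, (j<n)%nat -> f j = g j) -> sumR n f = sumR n g.
Proof. induction n; simpl; intros H; auto. rewrite IHn by (intros; apply H; lia).
  rewrite H by lia. auto. Qed.

Lemma sumR_split n g i : (i < n)%nat ->
  sumR n g = g i + sumR n (fun j => if Nat.eq_dec j i then 0 else g j).
Proof.
  induction n; intros Hi; [lia|]. simpl.
  destruct (Nat.eq_dec n i) as [->|Hne].
  - rewrite (sumR_ext i (fun j => if Nat.eq_dec j i then 0 else g j) g). lra.
    intros j Hj. destruct (Nat.eq_dec j i); [lia|auto].
  - rewrite IHn by lia. lra.
Qed.

Lemma sumR_nonneg n f : (forall j, (j<n)%nat -> 0 <= f j) -> 0 <= sumR n f.
Proof. induction n; simpl; intros H; [lra|].
  assert (0 <= sumR n f) by (apply IHn; intros; apply H; lia).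
  assert (0 <= f n) by (apply H; lia). lra. Qed.

Lemma sumR_pos n f k : (forall j, (j<n)%nat -> 0 <= f j) -> (k<n)%nat -> 0 < f k -> 0 < sumR n f.
Proof.
  induction n; intros H Hk Hf; [lia|]. simpl.
  destruct (Nat.eq_dec k n) as [->|Hne].
  - assert (0 <= sumR n f) by (apply sumR_nonneg; intros; apply H; lia). lra.
  - assert (0 < sumR n f) by (apply IHn; [intros; apply H; lia| lia| auto]).
    assert (0 <= f n) by (apply H; lia). lra.
Qed.

Lemma sumR_deriv n (g : nat -> R -> R) (d : nat -> R) x :
  (forall j, (j<n)%nat -> derivable_pt_lim (g j) x (d j)) ->
  derivable_pt_lim (fun y => sumR n (fun j => g j y)) x (sumR n d).
Proof.
  induction n; intros H; simpl.
  - apply derivable_pt_lim_const.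
  - apply (derivable_pt_lim_plus (fun y => sumR n (fun j => g j y)) (g n)).
    + apply IHn; intros; apply H; lia.
    + apply H; lia.
Qed.

Lemma unif_delta (n:nat) (Q: nat -> R -> Prop) :
  (forall j, (j<n)%nat -> exists d, 0<d /\ forall e, Rabs e < d -> Q j e) ->
  exists d, 0<d /\ forall j e, (j<n)%nat -> Rabs e < d -> Q j e.
Proof. induction n; intros H.
  - exists 1; split; [lra| intros; lia].
  - destruct IHn as [d1 [Hd1 H1]]. intros j Hj; apply H; lia.
    destruct (H n ltac:(lia)) as [d2 [Hd2 H2]].
    destruct (pos_min d1 d2 Hd1 Hd2) as [m [Hm [Hm1 Hm2]]].
    exists m; split; auto. intros j e Hj He.
    destruct (Nat.eq_dec j n) as [->|Hne]. apply H2; lra. apply H1; [lia|lra].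
Qed.

Lemma deriv_cont f x d : derivable_pt_lim f x d -> forall eps, 0<eps ->
  exists del, 0<del /\ forall y, Rabs (y-x) < del -> Rabs (f y - f x) < eps.
Proof.
  intros H eps He. assert (C := derivable_continuous_pt f x (exist _ d H)).
  unfold continuity_pt, continue_in, limit1_in, limit_in in C.
  destruct (C eps He) as [a [Ha Hb]]. exists a; split; auto. intros y Hy.
  destruct (Req_dec y x) as [->|Hne].
  - unfold Rminus; rewrite Rplus_opp_r, Rabs_R0; auto.
  - apply (Hb y). split. unfold D_x, no_cond. split; auto. simpl; unfold R_dist; auto.
Qed.

Lemma dpos_right f x d : derivable_pt_lim f x d -> 0 < d ->
  exists del, 0 < del /\ forall y, x < y -> y < x + del -> f x < f y.
Proof. intros H Hd. destruct (H d Hd) as [del Hdel]. exists del; split; [apply cond_pos|].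
  intros y H1 H2. specialize (Hdel (y - x)). replace (x + (y-x)) with y in Hdel by ring.
  assert (Hq: 0 < (f y - f x)/(y-x)).
  { assert (Rabs ((f y - f x)/(y-x) - d) < d) as H0 by (apply Hdel; [lra| rewrite Rabs_right; lra]).
    apply Rabs_def2 in H0. lra. }
  assert (f y - f x = (f y - f x)/(y-x) * (y-x)) by (field; lra). nra. Qed.

Lemma dpos_left f x d : derivable_pt_lim f x d -> 0 < d ->
  exists del, 0 < del /\ forall y, x - del < y -> y < x -> f y < f x.
Proof. intros H Hd. destruct (H d Hd) as [del Hdel]. exists del; split; [apply cond_pos|].
  intros y H1 H2. specialize (Hdel (y - x)). replace (x + (y-x)) with y in Hdel by ring.
  assert (Hq: 0 < (f y - f x)/(y-x)).
  { assert (Rabs ((f y - f x)/(y-x) - d) < d) as H0 by (apply Hdel; [lra| rewrite Rabs_left; lra]).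
    apply Rabs_def2 in H0. lra. }
  assert (f y - f x = (f y - f x)/(y-x) * (y-x)) by (field; lra). nra. Qed.

Lemma dneg_right f x d : derivable_pt_lim f x d -> d < 0 ->
  exists del, 0 < del /\ forall y, x < y -> y < x + del -> f y < f x.
Proof. intros H Hd. destruct (H (-d) ltac:(lra)) as [del Hdel]. exists del; split; [apply cond_pos|].
  intros y H1 H2. specialize (Hdel (y - x)). replace (x + (y-x)) with y in Hdel by ring.
  assert (Hq: (f y - f x)/(y-x) < 0).
  { assert (Rabs ((f y - f x)/(y-x) - d) < -d) as H0 by (apply Hdel; [lra| rewrite Rabs_right; lra]).
    apply Rabs_def2 in H0. lra. }
  assert (f y - f x = (f y - f x)/(y-x) * (y-x)) by (field; lra). nra. Qed.

Lemma dneg_left f x d : derivable_pt_lim f x d -> d < 0 ->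
  exists del, 0 < del /\ forall y, x - del < y -> y < x -> f x < f y.
Proof. intros H Hd. destruct (H (-d) ltac:(lra)) as [del Hdel]. exists del; split; [apply cond_pos|].
  intros y H1 H2. specialize (Hdel (y - x)). replace (x + (y-x)) with y in Hdel by ring.
  assert (Hq: (f y - f x)/(y-x) < 0).
  { assert (Rabs ((f y - f x)/(y-x) - d) < -d) as H0 by (apply Hdel; [lra| rewrite Rabs_left; lra]).
    apply Rabs_def2 in H0. lra. }
  assert (f y - f x = (f y - f x)/(y-x) * (y-x)) by (field; lra). nra. Qed.

Lemma Lc_deriv_pos f df x0 : in_Lc f df -> 0 < x0 -> 0 < df x0.
Proof.
  intros [H0 [Hinc [Hconv [Hder _]]]] Hx.
  assert (HK: f (x0/2) < f x0) by (apply Hinc; lra).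
  assert (Heps: 0 < 2*(f x0 - f (x0/2))/x0) by (apply Rdiv_lt_0_compat; lra).
  destruct (Hder x0 Hx _ Heps) as [del Hdel].
  pose proof (cond_pos del) as Hdp.
  destruct (pos_min del x0 Hdp Hx) as [m [Hm [Hm1 Hm2]]].
  assert (Ha: 0 < m/x0) by (apply Rdiv_lt_0_compat; lra).
  assert (Hax: m/x0 * x0 = m) by (field; lra).
  assert (Ha1: m/x0 <= 1).
  { destruct (Rle_dec (m/x0) 1); auto. nra. }
  pose proof (Hconv (x0/2) x0 (m/x0) ltac:(lra) ltac:(lra) ltac:(lra) Ha1) as Hc.
  replace (m/x0 * (x0/2) + (1 - m/x0) * x0) with (x0 + - (m/2)) in Hc by (field; lra).
  specialize (Hdel (-(m/2)) ltac:(lra) ltac:(rewrite Rabs_left; lra)).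
  set (q := (f (x0 + - (m/2)) - f x0) / - (m/2)) in Hdel.
  assert (Hq: q * (-(m/2)) = f (x0 + - (m/2)) - f x0) by (unfold q; field; lra).
  assert (Hq2: 2*(f x0 - f (x0/2))/x0 <= q).
  { assert (m * q >= m * (2*(f x0 - f (x0/2))/x0)); [|nra].
    replace (m * (2*(f x0 - f (x0/2))/x0)) with (2 * (m/x0) * (f x0 - f (x0/2))) by (field; lra).
    nra. }
  apply Rabs_def2 in Hdel. lra.
Qed.

Definition inv (f : R -> R) (m : R) : R :=
  match excluded_middle_informative (exists y, 0 < y /\ f y = m) with
  | left H => proj1_sig (constructive_indefinite_description _ H)
  | right _ => 0 end.

Lemma inv_spec f m y : (forall a b, 0 <= a -> a < b -> f a < f b) -> 0 < y -> f y = m -> inv f m = y.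
Proof. intros Hinc Hy Hf. unfold inv. destruct excluded_middle_informative as [H|H].
  - destruct (constructive_indefinite_description _ H) as [z [Hz Hfz]]. simpl.
    destruct (Rtotal_order z y) as [Hl|[He|Hg]]; auto.
    + specialize (Hinc z y ltac:(lra) Hl); lra.
    + specialize (Hinc y z ltac:(lra) Hg); lra.
  - exfalso; apply H; eauto.
Qed.

Lemma inv_local f df x0 : in_Lc f df -> 0 < x0 -> exists del, 0 < del /\
  (forall m, Rabs (m - f x0) < del -> 0 < inv f m /\ f (inv f m) = m) /\
  derivable_pt_lim (inv f) (f x0) (/ df x0).
Proof.
  intros HL Hx. pose proof (Lc_deriv_pos _ _ _ HL Hx) as Hd.
  destruct HL as [H0 [Hinc [Hconv [Hder [_ _]]]]].
  set (lb := x0/2). set (ub := 2*x0).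
  assert (Hlb: 0 < lb) by (unfold lb; lra).
  assert (Hlu: lb < ub) by (unfold lb, ub; lra).
  assert (Hcont : forall a, 0 < a -> continuity_pt f a)
    by (intros a Ha; apply (derivable_continuous_pt f a (exist _ (df a) (Hder a Ha)))).
  assert (Hflb: f lb < f x0) by (apply Hinc; unfold lb; lra).
  assert (Hfub: f x0 < f ub) by (apply Hinc; unfold ub; lra).
  assert (Hex: forall m, f lb <= m <= f ub -> lb <= inv f m <= ub /\ f (inv f m) = m).
  { intros m [Hm1 Hm2].
    assert (exists y, lb <= y <= ub /\ f y = m) as [y [Hy Hfy]].
    { destruct (Req_dec m (f lb)) as [->|Hn1]. exists lb; split; [lra|auto].
      destruct (Req_dec m (f ub)) as [->|Hn2]. exists ub; split; [lra|auto].
      destruct (IVT_interv (fun z => f z - m) lb ub) as [z [Hz Hfz]].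
      - intros a Ha. apply (continuity_pt_minus f (fct_cte m)). apply Hcont; lra.
        apply continuity_pt_const. unfold constant, fct_cte; auto.
      - lra. - simpl; lra. - simpl; lra.
      - exists z; split; auto; simpl in Hfz; lra. }
    rewrite (inv_spec f m y); auto; lra. }
  set (g := inv f).
  assert (Hgc: continuity_pt g (f x0)).
  { apply (continuity_pt_recip_interv f g lb ub Hlu).
    - intros; apply Hinc; lra.
    - intros y Hy1 Hy2; unfold comp, id; apply Hex; lra.
    - intros; apply Hex; lra.
    - intros a Ha; apply Hcont; lra.
    - lra. }
  assert (Hgx0: g (f x0) = x0) by (apply inv_spec; auto).
  assert (Hglb: g (f lb) = lb) by (apply inv_spec; auto).
  assert (Hgub: g (f ub) = ub) by (apply inv_spec; auto; lra).
  assert (Prf : forall a, g (f lb) <= a <= g (f ub) -> derivable_pt f a).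
  { intros a Ha. exists (df a). apply Hder. rewrite Hglb in Ha. lra. }
  assert (Hincr : g (f lb) <= g (f x0) <= g (f ub)) by (rewrite Hglb, Hgx0, Hgub; unfold lb, ub; lra).
  pose proof (derivable_pt_lim_recip_interv f g (f lb) (f ub) (f x0) Prf Hgc ltac:(lra) ltac:(lra) Hincr) as R.
  assert (Hdp: derive_pt f (g (f x0)) (Prf (g (f x0)) Hincr) = df x0)
    by (apply derive_pt_eq_0; rewrite Hgx0; apply Hder; lra).
  rewrite Hdp in R.
  assert (Hcomp: forall y, f lb <= y <= f ub -> comp f g y = id y).
  { intros y Hy; unfold comp, id; apply Hex; lra. }
  specialize (R Hcomp ltac:(lra)).
  destruct (pos_min (f x0 - f lb) (f ub - f x0) ltac:(lra) ltac:(lra)) as [m [Hm [Hm1 Hm2]]].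
  exists m; split; auto; split.
  - intros y Hy. apply Rabs_def2 in Hy. destruct (Hex y ltac:(lra)) as [A B]. split; [apply Rlt_le_trans with lb; [exact Hlb| apply A]|exact B].
  - replace (/ df x0) with (1 / df x0) by (field; lra). exact R.
Qed.

Theorem mainTheorem4 (n : nat) (l dl : nat -> R -> R) (c : option R)
  (t : nat -> R) :
  (2 <= n)%nat ->
  (forall i, (i < n)%nat -> in_Lc (l i) (dl i)) ->
  (match c with Some c0 => 0 <= c0 | None => True end) ->
  in_T n l c t ->
  forall x : nat -> R, wardrop n l t x ->
  (forall i, (i < n)%nat -> 0 < x i) ->
  forall i, (i < n)%nat ->
    t i = min_cap
      ((dl i (x i) +
        / sumR n (fun j => if Nat.eq_dec j i then 0 else / dl j (x j))) * x i) c.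
Proof.
  intros Hn HL Hc [HT1 HT2] x [Hx0 [Hsum Hw]] Hxpos i Hi.
  remember (l i (x i) + t i) as L0 eqn:HL0.
  assert (Heq: forall j, (j<n)%nat -> l j (x j) + t j = L0).
  { intros j Hj. pose proof (Hw i j Hi Hj (Hxpos i Hi)). pose proof (Hw j i Hj Hi (Hxpos j Hj)). lra. }
  assert (Hdpos: forall j, (j<n)%nat -> 0 < dl j (x j)).
  { intros j Hj. apply (Lc_deriv_pos (l j)); auto. }
  assert (Hincj: forall j, (j<n)%nat -> forall a b, 0 <= a -> a < b -> l j a < l j b).
  { intros j Hj. destruct (HL j Hj) as [_ [H _]]; exact H. }
  remember (sumR n (fun j => if Nat.eq_dec j i then 0 else / dl j (x j))) as S eqn:HSd.
  assert (HS: 0 < S).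
  { rewrite HSd. apply (sumR_pos _ _ (if Nat.eq_dec i 0 then 1%nat else 0%nat)).
    - intros j Hj. destruct (Nat.eq_dec j i); [lra|]. left; apply Rinv_0_lt_compat; auto.
    - destruct (Nat.eq_dec i 0); lia.
    - destruct (Nat.eq_dec i 0) as [E|E]; destruct (Nat.eq_dec _ i); try lia;
      apply Rinv_0_lt_compat; apply Hdpos; lia. }
  assert (Hloc: exists d, 0<d /\ forall j lam, (j<n)%nat -> Rabs (lam - L0) < d ->
     0 < inv (l j) (lam - t j) /\ l j (inv (l j) (lam - t j)) = lam - t j).
  { destruct (unif_delta n (fun j e => 0 < inv (l j) (L0 + e - t j) /\ l j (inv (l j) (L0 + e - t j)) = L0 + e - t j)) as [d [Hd H]].
    - intros j Hj. destruct (inv_local _ _ (x j) (HL j Hj) (Hxpos j Hj)) as [d [Hd [Hm _]]].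
      exists d; split; auto. intros e He. apply Hm.
      replace (L0 + e - t j - l j (x j)) with e by (rewrite <- (Heq j Hj); ring). auto.
    - exists d; split; auto. intros j lam Hj Hl. replace lam with (L0 + (lam - L0)) by ring.
      apply H; auto. }
  destruct Hloc as [dloc [Hdloc Hloc]].
  set (Y := fun lam => sumR n (fun j => if Nat.eq_dec j i then 0 else inv (l j) (lam - t j))).
  assert (HdY: derivable_pt_lim Y L0 S).
  { unfold Y; rewrite HSd.
    apply (sumR_deriv n (fun j lam => if Nat.eq_dec j i then 0 else inv (l j) (lam - t j))).
    intros j Hj. destruct (Nat.eq_dec j i). apply derivable_pt_lim_const.
    destruct (inv_local _ _ (x j) (HL j Hj) (Hxpos j Hj)) as [_ [_ [_ Hd]]].
    replace (/ dl j (x j)) with (/ dl j (x j) * 1) by ring.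
    apply (derivable_pt_lim_comp (fun lam => lam - t j) (inv (l j))).
    - replace 1 with (1 - 0) by ring.
      apply (derivable_pt_lim_minus id (fct_cte (t j))); [apply derivable_pt_lim_id | apply derivable_pt_lim_const].
    - replace (L0 - t j) with (l j (x j)) by (rewrite <- (Heq j Hj); ring). exact Hd. }
  assert (HY0: Y L0 = 1 - x i).
  { unfold Y. rewrite (sumR_ext n _ (fun j => if Nat.eq_dec j i then 0 else x j)).
    - rewrite (sumR_split n x i Hi) in Hsum. lra.
    - intros j Hj. destruct (Nat.eq_dec j i); auto. apply inv_spec; auto.
      rewrite <- (Heq j Hj); ring. }
  set (yi := fun lam => 1 - Y lam).
  assert (Hdyi: derivable_pt_lim yi L0 (0 - S)).
  { apply (derivable_pt_lim_minus (fct_cte 1) Y); auto. apply derivable_pt_lim_const. }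
  assert (Hyi0: yi L0 = x i) by (unfold yi; lra).
  assert (Hdli: derivable_pt_lim (fun lam => l i (yi lam)) L0 (dl i (x i) * (0 - S))).
  { apply (derivable_pt_lim_comp yi (l i)); auto. rewrite Hyi0.
    destruct (HL i Hi) as [_ [_ [_ [H _]]]]. apply H; auto. }
  set (tp := fun lam => lam - l i (yi lam)).
  assert (Hdtp: derivable_pt_lim tp L0 (1 - dl i (x i) * (0 - S))).
  { apply (derivable_pt_lim_minus id (fun lam => l i (yi lam))); auto. apply derivable_pt_lim_id. }
  assert (Htp0: tp L0 = t i) by (unfold tp; rewrite Hyi0; lra).
  set (P := fun lam => tp lam * yi lam).
  set (D := (1 - dl i (x i) * (0 - S)) * x i + t i * (0 - S)).
  assert (HdP: derivable_pt_lim P L0 D).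
  { assert (H := derivable_pt_lim_mult tp yi L0 _ _ Hdtp Hdyi).
    rewrite Htp0, Hyi0 in H. exact H. }
  assert (HP0: P L0 = t i * x i) by (unfold P; rewrite Htp0, Hyi0; auto).
  assert (Hdev: forall lam, Rabs (lam - L0) < dloc -> 0 < yi lam -> 0 <= tp lam ->
            below_cap c (tp lam) -> P lam <= t i * x i).
  { intros lam Hl Hy Ht Hcap.
    set (x' := fun j => if Nat.eq_dec j i then yi lam else inv (l j) (lam - t j)).
    assert (Hx'i: x' i = yi lam) by (unfold x'; destruct (Nat.eq_dec i i); [auto|lia]).
    assert (Hcost: forall j, (j<n)%nat -> l j (x' j) + upd t i (tp lam) j = lam).
    { intros j Hj. unfold x', upd. destruct (Nat.eq_dec j i) as [->|Hne].
      - unfold tp; ring.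
      - destruct (Hloc j lam Hj Hl) as [_ E]. rewrite E; ring. }
    assert (Hw': wardrop n l (upd t i (tp lam)) x').
    { split; [|split].
      - intros j Hj. unfold x'. destruct (Nat.eq_dec j i); [lra|].
        left; apply (Hloc j lam Hj Hl).
      - rewrite (sumR_split n x' i Hi), Hx'i.
        rewrite (sumR_ext n _ (fun j => if Nat.eq_dec j i then 0 else inv (l j) (lam - t j))).
        + fold (Y lam). unfold yi; ring.
        + intros j Hj. unfold x'. destruct (Nat.eq_dec j i); auto.
      - intros j k Hj Hk _. rewrite (Hcost j Hj), (Hcost k Hk). lra. }
    pose proof (HT2 i (tp lam) Hi Ht Hcap x x' (conj Hx0 (conj Hsum Hw)) Hw') as H.
    rewrite Hx'i in H. unfold P. exact H. }
  assert (Hcyi: exists d, 0 < d /\ forall lam, Rabs (lam - L0) < d -> 0 < yi lam).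
  { destruct (deriv_cont _ _ _ Hdyi (x i) (Hxpos i Hi)) as [d [Hd H]].
    exists d; split; auto. intros lam Hl. specialize (H lam Hl). apply Rabs_def2 in H. lra. }
  destruct Hcyi as [dy [Hdy Hyp]].
  assert (HdtpPos: 0 < 1 - dl i (x i) * (0 - S)).
  { pose proof (Hdpos i Hi). nra. }
  set (F := (dl i (x i) + / S) * x i).
  assert (HD: D = S * (F - t i)) by (unfold D, F; field; lra).
  assert (HF: 0 < F).
  { unfold F. pose proof (Hdpos i Hi). pose proof (Rinv_0_lt_compat S HS). pose proof (Hxpos i Hi). nra. }
  assert (Hti: 0 <= t i /\ below_cap c (t i)) by (apply HT1; auto).
  assert (Hup: 0 < D -> (exists d, 0 < d /\ forall lam, L0 < lam < L0 + d -> below_cap c (tp lam)) -> False).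
  { intros HDp [dc [Hdc Hcap]].
    destruct (dpos_right _ _ _ HdP HDp) as [d1 [Hd1 H1]].
    destruct (dpos_right _ _ _ Hdtp HdtpPos) as [d2 [Hd2 H2]].
    destruct (pos_min d1 d2 Hd1 Hd2) as [m1 [Hm1 [Hm11 Hm12]]].
    destruct (pos_min dloc dy Hdloc Hdy) as [m2 [Hm2 [Hm21 Hm22]]].
    destruct (pos_min m1 m2 Hm1 Hm2) as [m3 [Hm3 [Hm31 Hm32]]].
    destruct (pos_min m3 dc Hm3 Hdc) as [m [Hm [Hm41 Hm42]]].
    set (lam := L0 + m/2).
    assert (Habs: Rabs (lam - L0) = m/2) by (unfold lam; rewrite Rabs_right; lra).
    assert (A1: P L0 < P lam) by (apply H1; unfold lam; lra).
    assert (A2: tp L0 < tp lam) by (apply H2; unfold lam; lra).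
    assert (A3: P lam <= t i * x i).
    { apply Hdev. rewrite Habs; lra. apply Hyp; rewrite Habs; lra. lra.
      apply Hcap; unfold lam; lra. }
    lra. }
  assert (Hdown: D < 0 -> 0 < t i -> False).
  { intros HDn Htpos.
    destruct (dneg_left _ _ _ HdP HDn) as [d1 [Hd1 H1]].
    destruct (dpos_left _ _ _ Hdtp HdtpPos) as [d2 [Hd2 H2]].
    destruct (deriv_cont _ _ _ Hdtp (t i) Htpos) as [d3 [Hd3 H3]].
    destruct (pos_min d1 d2 Hd1 Hd2) as [m1 [Hm1 [Hm11 Hm12]]].
    destruct (pos_min dloc dy Hdloc Hdy) as [m2 [Hm2 [Hm21 Hm22]]].
    destruct (pos_min m1 m2 Hm1 Hm2) as [m3 [Hm3 [Hm31 Hm32]]].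
    destruct (pos_min m3 d3 Hm3 Hd3) as [m [Hm [Hm41 Hm42]]].
    set (lam := L0 - m/2).
    assert (Habs: Rabs (lam - L0) = m/2) by (unfold lam; rewrite Rabs_left; lra).
    assert (A1: P L0 < P lam) by (apply H1; unfold lam; lra).
    assert (A2: tp lam < tp L0) by (apply H2; unfold lam; lra).
    assert (A4: 0 < tp lam).
    { assert (Rabs (tp lam - tp L0) < t i) as E by (apply H3; rewrite Habs; lra).
      apply Rabs_def2 in E. lra. }
    assert (A3: P lam <= t i * x i).
    { apply Hdev. rewrite Habs; lra. apply Hyp; rewrite Habs; lra. lra.
      destruct c as [c0|]; simpl in *; auto. lra. }
    lra. }
  destruct Hti as [Hti0 Hticap].
  destruct (Rtotal_order F (t i)) as [Hlt|[Heq'|Hgt]].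
  - exfalso. apply Hdown. rewrite HD. nra. lra.
  - destruct c as [c0|]; simpl in *.
    + rewrite Rmin_left; lra.
    + lra.
  - assert (HDp: 0 < D) by (rewrite HD; nra).
    destruct c as [c0|]; simpl in *.
    + destruct (Req_dec (t i) c0) as [E|E].
      * rewrite Rmin_right; lra.
      * exfalso. apply Hup; auto.
        destruct (deriv_cont _ _ _ Hdtp (c0 - t i) ltac:(lra)) as [d3 [Hd3 H3]].
        exists d3; split; auto. intros lam Hl.
        assert (Rabs (tp lam - tp L0) < c0 - t i) as E2 by (apply H3; rewrite Rabs_right; lra).
        apply Rabs_def2 in E2. lra.
    + exfalso. apply Hup; auto. exists 1; split; [lra|]. intros; exact I.
Qed.
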